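(* Let $\mathfrak g$ be a real nilpotent Lie algebra with a Ricci-flat metric $\langle,\rangle_{\mathfrak g}$. Let $\mathfrak a\subset\operatorname{Der}\mathfrak g$ be a Lie subalgebra of derivations that are self-adjoint with respect to $\langle,\rangle_{\mathfrak g}$, and assume $\operatorname{Tr}(X\circ Y)=0$ for all $X,Y\in\mathfrak a$. (1) If all elements of $\mathfrak a$ are trace-free, then for any metric $\langle,\rangle_{\mathfrak a}$ on $\mathfrak a$, the semidirect product $\tilde{\mathfrak g}=\mathfrak g\rtimes\mathfrak a$ (with $[X,v]=X(v)$ for $X\in\mathfrak a$, $v\in\mathfrak g$) endowed with the metric $\langle,\rangle_{\mathfrak g}+\langle,\rangle_{\mathfrak a}$ ($\mathfrak g\perp\mathfrak a$) is Ricci-flat and $\mathfrak g\oplus^\perp\mathfrak a$ is a pseudo-Iwasawa decomposition. (2) If not all elements of $\mathfrak a$ are trace-free, let $\mathfrak a_0\subset\mathfrak a$ be the subspace of trace-free elements, and let $\langle,\rangle_{\mathfrak a}$ be any metric on $\mathfrak a$ whose restriction to $\mathfrak a_0$ is nondegenerate. Let $\tilde{\mathfrak g}=\mathfrak g\rtimes(\mathfrak a\oplus\operatorname{Span}\{H\})$, where $H$ acts trivially ($\operatorname{ad}H=0$) and $\mathfrak a$ acts as in (1), endowed with the symmetric bilinear form $\langle,\rangle_{\mathfrak g}+\langle,\rangle_{\mathfrak a}+\langle,\rangle_H$, where $\mathfrak g$ is orthogonal to $\mathfrak a\oplus\operatorname{Span}\{H\}$, and $\langle,\rangle_H$ is the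 symmetric form with $\langle X,H\rangle_H=\operatorname{Tr}X$ for $X\in\mathfrak a$, $\langle H,H\rangle_H=0$ and vanishing on $\mathfrak a\times\mathfrak a$. Then this defines a Ricci-flat metric on $\tilde{\mathfrak g}$ and $\mathfrak g\oplus^\perp(\mathfrak a\oplus\operatorname{Span}\{H\})$ is a pseudo-Iwasawa decomposition.
   Context: A metric on a Lie algebra (or vector space) is a nondegenerate symmetric bilinear form, possibly indefinite; Ricci tensors are those of the corresponding left-invariant pseudo-Riemannian metrics on simply connected Lie groups. A pseudo-Iwasawa decomposition of a metric Lie algebra $\tilde{\mathfrak g}$ is an orthogonal direct sum of vector spaces $\tilde{\mathfrak g}=\mathfrak g\oplus^\perp\mathfrak b$ with $\mathfrak g$ a nilpotent ideal, $\mathfrak b$ an abelian subalgebra, and $\operatorname{ad}X$ self-adjoint for every $X\in\mathfrak b$. *)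

(* Defs.v *)
(* Real Lie algebras are modelled in coordinates:
   a Lie algebra of dimension N is a bracket on column vectors 'cV[R]_N,
   a metric is a symmetric invertible Gram matrix. *)
From mathcomp Require Import all_boot all_order all_algebra.
From mathcomp Require Import reals.
Set Implicit Arguments.
Unset Strict Implicit.
Unset Printing Implicit Defensive.
Import Order.TTheory GRing.Theory Num.Theory.
Local Open Scope ring_scope.

Section MetricLie.
Variable R : realType.

Definition form N (G : 'M[R]_N) (u v : 'cV[R]_N) : R := (u^T *m G *m v) 0 0.

Definition ev N (i : 'I_N) : 'cV[R]_N := delta_mx i 0.

Definition lie_bracket N (br : 'cV[R]_N -> 'cV[R]_N -> 'cV[R]_N) : Prop :=
  [/\ (forall (a : R) u v w, br (a *: u + v) w = a *: br u w + br v w),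
      (forall (a : R) u v w, br u (a *: v + w) = a *: br u v + br u w),
      (forall u, br u u = 0) &
      (forall u v w, br u (br v w) + br v (br w u) + br w (br u v) = 0)].

(* nilpotent: the lower central series terminates, i.e. all right-nested
   brackets [x_1,[x_2,...[x_k,y]...]] of some fixed length vanish *)
Definition nilpotent_lie N (br : 'cV[R]_N -> 'cV[R]_N -> 'cV[R]_N) : Prop :=
  exists k : nat, forall (xs : seq 'cV[R]_N) (y : 'cV[R]_N),
    size xs = k -> foldr br y xs = 0.

Definition is_metric N (G : 'M[R]_N) : Prop := G^T = G /\ G \in unitmx.

(* Levi-Civita connection of the left-invariant metric (Koszul formula):
   2<nabla_x y, z> = <[x,y],z> - <[y,z],x> + <[z,x],y> *)
Definition nabla N (br : 'cV[R]_N -> 'cV[R]_N -> 'cV[R]_N) (G : 'M[R]_N)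
  (x y : 'cV[R]_N) : 'cV[R]_N :=
  invmx G *m \col_k (2^-1 * (form G (br x y) (ev k) - form G (br y (ev k)) x
                              + form G (br (ev k) x) y)).

Definition curv N br (G : 'M[R]_N) (x y z : 'cV[R]_N) : 'cV[R]_N :=
  nabla br G x (nabla br G y z) - nabla br G y (nabla br G x z)
  - nabla br G (br x y) z.

Definition ricci N br (G : 'M[R]_N) (y z : 'cV[R]_N) : R :=
  \sum_(i < N) (curv br G (ev i) y z) i 0.

Definition ricci_flat N br (G : 'M[R]_N) : Prop :=
  forall y z, ricci br G y z = 0.

Definition derivation N (br : 'cV[R]_N -> 'cV[R]_N -> 'cV[R]_N) (D : 'M[R]_N) :=
  forall x y, D *m br x y = br (D *m x) y + br x (D *m y).

Definition self_adjoint N (G : 'M[R]_N) (D : 'M[R]_N) :=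
  forall x y, form G (D *m x) y = form G x (D *m y).

Definition comb n m (D : 'I_m -> 'M[R]_n) (x : 'cV[R]_m) : 'M[R]_n :=
  \sum_(i < m) x i 0 *: D i.

Definition lin_indep n m (D : 'I_m -> 'M[R]_n) : Prop :=
  forall x : 'cV[R]_m, comb D x = 0 -> x = 0.

(* bracket on a, in coordinates w.r.t. the basis, from structure constants *)
Definition bra m (ca : 'I_m -> 'I_m -> 'cV[R]_m) (x y : 'cV[R]_m) : 'cV[R]_m :=
  \sum_(i < m) \sum_(j < m) (x i 0 * y j 0) *: ca i j.

(* semidirect product g x| b on 'cV_(n+k): first n coordinates = g,
   last k coordinates = b acting on g through A *)
Definition semibr n k (bg : 'cV[R]_n -> 'cV[R]_n -> 'cV[R]_n)
  (A : 'cV[R]_k -> 'M[R]_n) (bb : 'cV[R]_k -> 'cV[R]_k -> 'cV[R]_k)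
  (u v : 'cV[R]_(n + k)) : 'cV[R]_(n + k) :=
  col_mx (bg (usubmx u) (usubmx v) + A (dsubmx u) *m usubmx v
          - A (dsubmx v) *m usubmx u)
         (bb (dsubmx u) (dsubmx v)).

(* pseudo-Iwasawa decomposition g~ = g (+)^perp b, where g = first n
   coordinates and b = last k coordinates *)
Definition pseudo_iwasawa n k (br : 'cV[R]_(n + k) -> 'cV[R]_(n + k) -> 'cV[R]_(n + k))
  (Gt : 'M[R]_(n + k)) : Prop :=
  [/\ (forall (v : 'cV[R]_n) (x : 'cV[R]_k),
         form Gt (col_mx v 0) (col_mx 0 x) = 0),
      (forall (u : 'cV[R]_(n + k)) (v : 'cV[R]_n), dsubmx (br u (col_mx v 0)) = 0),
      nilpotent_lie (fun v w : 'cV[R]_n => usubmx (br (col_mx v 0) (col_mx w 0))),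
      (forall x y : 'cV[R]_k, br (col_mx 0 x) (col_mx 0 y) = 0) &
      (forall (x : 'cV[R]_k) (u w : 'cV[R]_(n + k)),
         form Gt (br (col_mx 0 x) u) w = form Gt u (br (col_mx 0 x) w))].

Definition nondeg_on m (P : 'cV[R]_m -> Prop) (Ga : 'M[R]_m) : Prop :=
  forall x, P x -> (forall y, P y -> form Ga x y = 0) -> x = 0.

(* part (2): b = a (+) Span{H}, coordinates (x, h) with H = last coordinate *)
Definition actH n m (D : 'I_m -> 'M[R]_n) (z : 'cV[R]_(m + 1)) : 'M[R]_n :=
  comb D (usubmx z).

Definition braH m (ca : 'I_m -> 'I_m -> 'cV[R]_m) (z w : 'cV[R]_(m + 1))
  : 'cV[R]_(m + 1) := col_mx (bra ca (usubmx z) (usubmx w)) 0.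

(* <,>_a + <,>_H : <X,H> = Tr X, <H,H> = 0 *)
Definition metricH n m (D : 'I_m -> 'M[R]_n) (Ga : 'M[R]_m) : 'M[R]_(m + 1) :=
  block_mx Ga (\matrix_(i < m, j < 1) \tr (D i))
              (\matrix_(i < 1, j < m) \tr (D j)) 0.

End MetricLie.

(* Main.v *)
From Pilot Require Import Defs.
From mathcomp Require Import all_boot all_order all_algebra.
From mathcomp Require Import reals.
From mathcomp Require Import ring lra.
Import Order.TTheory GRing.Theory Num.Theory.
Local Open Scope ring_scope.
Set Implicit Arguments. Unset Strict Implicit. Unset Printing Implicit Defensive.
Local Notation form := Pilot.Defs.form.

Ltac vec := let i := fresh "i" in let j := fresh "j" in
  apply/matrixP => i j; rewrite !mxE; ring.

Definition linf (R : realType) p (W : lmodType R) (f : 'cV[R]_p -> W) :=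
  forall (a : R) u v, f (a *: u + v) = a *: f u + f v.

Definition linr (R : realType) p (f : 'cV[R]_p -> R) :=
  forall (a : R) u v, f (a *: u + v) = a * f u + f v.

Lemma linf0 (R : realType) p (W : lmodType R) (f : 'cV[R]_p -> W) :
  linf f -> f 0 = 0.
Proof.
by move=> hf; have := hf (-1) 0 0; rewrite scaler0 addr0 scaleN1r addNr.
Qed.

Lemma linfD (R : realType) p (W : lmodType R) (f : 'cV[R]_p -> W) u v :
  linf f -> f (u + v) = f u + f v.
Proof. by move=> hf; have := hf 1 u v; rewrite !scale1r. Qed.

Lemma linfZ (R : realType) p (W : lmodType R) (f : 'cV[R]_p -> W) a u :
  linf f -> f (a *: u) = a *: f u.
Proof. by move=> hf; have := hf a u 0; rewrite !addr0 linf0 // addr0. Qed.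

Lemma linfN (R : realType) p (W : lmodType R) (f : 'cV[R]_p -> W) u :
  linf f -> f (- u) = - f u.
Proof. by move=> hf; rewrite -(scaleN1r u) linfZ // scaleN1r. Qed.

Lemma linfB (R : realType) p (W : lmodType R) (f : 'cV[R]_p -> W) u v :
  linf f -> f (u - v) = f u - f v.
Proof. by move=> hf; rewrite linfD // linfN. Qed.

Lemma linr0 (R : realType) p (f : 'cV[R]_p -> R) : linr f -> f 0 = 0.
Proof. by move=> hf; have := hf (-1) 0 0; rewrite scaler0 addr0 mulN1r addNr. Qed.

Lemma linrD (R : realType) p (f : 'cV[R]_p -> R) u v :
  linr f -> f (u + v) = f u + f v.
Proof. by move=> hf; have := hf 1 u v; rewrite !scale1r mul1r. Qed.

Lemma linrZ (R : realType) p (f : 'cV[R]_p -> R) a u :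
  linr f -> f (a *: u) = a * f u.
Proof. by move=> hf; have := hf a u 0; rewrite !addr0 linr0 // addr0. Qed.

Lemma cV_sum (R : realType) p (u : 'cV[R]_p) : u = \sum_j u j 0 *: ev R j.
Proof.
apply/matrixP => i j0; rewrite ord1 summxE (bigD1 i) //= big1 ?addr0.
  by rewrite !mxE !eqxx mulr1.
by move=> j /negbTE ne; rewrite !mxE eq_sym ne mulr0.
Qed.

Lemma linf_sum (R : realType) p (W : lmodType R) (f : 'cV[R]_p -> W) u :
  linf f -> f u = \sum_j u j 0 *: f (ev R j).
Proof.
move=> hf; rewrite {1}(cV_sum u).
elim/big_rec2: _ => [|j y1 y2 _ <-]; first exact: linf0.
by rewrite linfD // linfZ.
Qed.

Lemma linr_sum (R : realType) p (f : 'cV[R]_p -> R) u :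
  linr f -> f u = \sum_j u j 0 * f (ev R j).
Proof.
move=> hf; rewrite {1}(cV_sum u).
elim/big_rec2: _ => [|j y1 y2 _ <-]; first exact: linr0.
by rewrite linrD // linrZ.
Qed.

Definition mxof (R : realType) p q (f : 'cV[R]_p -> 'cV[R]_q) : 'M[R]_(q, p) :=
  \matrix_(i, j) f (ev R j) i 0.

Lemma mxofE (R : realType) p q (f : 'cV[R]_p -> 'cV[R]_q) u :
  linf f -> mxof f *m u = f u.
Proof.
move=> hf; rewrite (linf_sum u hf); apply/matrixP => i j; rewrite ord1 summxE !mxE.
by apply: eq_bigr => k _; rewrite !mxE mulrC.
Qed.

Definition trf (R : realType) p (f : 'cV[R]_p -> 'cV[R]_p) := \sum_i f (ev R i) i 0.

Lemma trf_mx (R : realType) p (f : 'cV[R]_p -> 'cV[R]_p) M :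
  (forall u, f u = M *m u) -> trf f = \tr M.
Proof.
move=> hf; rewrite /trf /mxtrace; apply: eq_bigr => i _; rewrite hf !mxE.
rewrite (bigD1 i) //= big1 ?addr0; first by rewrite !mxE !eqxx mulr1.
by move=> j /negbTE ne; rewrite !mxE ne mulr0.
Qed.

Lemma formDl (R : realType) N (G : 'M[R]_N) a u w v :
  form G (a *: u + w) v = a * form G u v + form G w v.
Proof. by rewrite /form linearD /= linearZ /= !mulmxDl -!scalemxAl !mxE. Qed.

Lemma formDr (R : realType) N (G : 'M[R]_N) a u w v :
  form G v (a *: u + w) = a * form G v u + form G v w.
Proof. by rewrite /form !mulmxDr -!scalemxAr !mxE. Qed.

Lemma formlin_l (R : realType) N (G : 'M[R]_N) v : linr (fun u => form G u v).
Proof. by move=> a u w; rewrite formDl. Qed.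

Lemma formlin_r (R : realType) N (G : 'M[R]_N) v : linr (form G v).
Proof. by move=> a u w; rewrite formDr. Qed.

Lemma form0l (R : realType) N (G : 'M[R]_N) v : form G 0 v = 0.
Proof. exact: (linr0 (formlin_l G v)). Qed.
Lemma form0r (R : realType) N (G : 'M[R]_N) v : form G v 0 = 0.
Proof. exact: (linr0 (formlin_r G v)). Qed.
Lemma formBl (R : realType) N (G : 'M[R]_N) u w v :
  form G (u - w) v = form G u v - form G w v.
Proof. by rewrite -scaleN1r addrC formDl; ring. Qed.
Lemma formBr (R : realType) N (G : 'M[R]_N) u w v :
  form G v (u - w) = form G v u - form G v w.
Proof. by rewrite -scaleN1r addrC formDr; ring. Qed.
Lemma formAl (R : realType) N (G : 'M[R]_N) u w v :
  form G (u + w) v = form G u v + form G w v.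
Proof. by rewrite -(scale1r u) formDl mul1r scale1r. Qed.
Lemma formAr (R : realType) N (G : 'M[R]_N) u w v :
  form G v (u + w) = form G v u + form G v w.
Proof. by rewrite -(scale1r u) formDr mul1r scale1r. Qed.
Lemma formZl (R : realType) N (G : 'M[R]_N) a u v :
  form G (a *: u) v = a * form G u v.
Proof. by rewrite -(addr0 (a *: u)) formDl form0l addr0. Qed.
Lemma formZr (R : realType) N (G : 'M[R]_N) a u v :
  form G v (a *: u) = a * form G v u.
Proof. by rewrite -(addr0 (a *: u)) formDr form0r addr0. Qed.
Lemma formNl (R : realType) N (G : 'M[R]_N) u v :
  form G (- u) v = - form G u v.
Proof. by rewrite -scaleN1r formZl mulN1r. Qed.
Lemma formNr (R : realType) N (G : 'M[R]_N) u v :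
  form G v (- u) = - form G v u.
Proof. by rewrite -scaleN1r formZr mulN1r. Qed.

Lemma form_sym (R : realType) N (G : 'M[R]_N) u v :
  G^T = G -> form G u v = form G v u.
Proof.
move=> sG; have e : forall M : 'M[R]_1, M 0 0 = M^T 0 0 by move=> M; rewrite mxE.
by rewrite /form e !trmx_mul trmxK sG mulmxA.
Qed.

Lemma form_mull (R : realType) N (G : 'M[R]_N) M u v :
  form G (M *m u) v = form (M^T *m G) u v.
Proof. by rewrite /form trmx_mul !mulmxA. Qed.

Lemma form_mulr (R : realType) N (G : 'M[R]_N) M u v :
  form G u (M *m v) = form (G *m M) u v.
Proof. by rewrite /form !mulmxA. Qed.

Lemma form_ev (R : realType) N (G : 'M[R]_N) i j :
  form G (ev R i) (ev R j) = G i j.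
Proof. by rewrite /form /ev trmx_delta -rowE -colE !mxE. Qed.

Lemma form_eqmx (R : realType) N (X Y : 'M[R]_N) :
  (forall u v, form X u v = form Y u v) -> X = Y.
Proof. by move=> h; apply/matrixP => i j; rewrite -!form_ev h. Qed.

Lemma formGinv (R : realType) N (G : 'M[R]_N) u v :
  G \in unitmx -> form G u (invmx G *m v) = (u^T *m v) 0 0.
Proof. by move=> uG; rewrite /form -mulmxA (mulmxA G) mulmxV // mul1mx. Qed.

Lemma trev (R : realType) N (u : 'cV[R]_N) i : (u^T *m ev R i) 0 0 = u i 0.
Proof. by rewrite /ev -colE !mxE. Qed.

Lemma form_nondeg (R : realType) N (G : 'M[R]_N) u :
  G \in unitmx -> (forall w, form G u w = 0) -> u = 0.
Proof.
move=> uG h; apply/matrixP => i j; rewrite ord1 -trev -(@formGinv R N G u _ uG) h.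
by rewrite !mxE.
Qed.

Lemma form_inj (R : realType) N (G : 'M[R]_N) u v :
  G \in unitmx -> (forall w, form G u w = form G v w) -> u = v.
Proof.
move=> uG h; apply/eqP; rewrite -subr_eq0; apply/eqP/(form_nondeg uG) => w.
by rewrite formBl h subrr.
Qed.

Definition bilin (R : realType) N (br : 'cV[R]_N -> 'cV[R]_N -> 'cV[R]_N) :=
  (forall z, linf (fun u => br u z)) /\ (forall z, linf (br z)).

Lemma lie_bilin (R : realType) N (br : 'cV[R]_N -> 'cV[R]_N -> 'cV[R]_N) :
  lie_bracket br -> bilin br.
Proof. by case=> h1 h2 _ _; split=> z a u v; [rewrite h1 | rewrite h2]. Qed.

Lemma lie_anti (R : realType) N (br : 'cV[R]_N -> 'cV[R]_N -> 'cV[R]_N) u v :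
  lie_bracket br -> br u v = - br v u.
Proof.
move=> L; have [[h1 h2] [_ _ h3 _]] := (lie_bilin L, L).
have := h3 (u + v); rewrite (linfD _ _ (h1 _)) (linfD _ _ (h2 _)) (linfD _ _ (h2 _)).
by rewrite !h3 add0r addr0 => /eqP; rewrite addr_eq0 => /eqP.
Qed.

Lemma nablaK (R : realType) N (br : 'cV[R]_N -> 'cV[R]_N -> 'cV[R]_N) G x y w :
  bilin br -> is_metric G ->
  form G (nabla br G x y) w = 2^-1 * (form G (br x y) w - form G (br y w) x
                                       + form G (br w x) y).
Proof.
move=> [h1 h2] [sG uG]; rewrite form_sym // formGinv //.
set K := fun w => form G (br x y) w - form G (br y w) x + form G (br w x) y.
have lK : linr K.
  move=> a u v; rewrite /K formDr (h2 y) (h1 x) formDl formDl.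
  ring.
rewrite -/(K w) (linr_sum w lK) mulr_sumr mxE; apply: eq_bigr => k _.
by rewrite !mxE /K; ring.
Qed.

Lemma nabla_char (R : realType) N (br : 'cV[R]_N -> 'cV[R]_N -> 'cV[R]_N) G x y v :
  bilin br -> is_metric G ->
  (forall w, form G v w = 2^-1 * (form G (br x y) w - form G (br y w) x
                                   + form G (br w x) y)) ->
  nabla br G x y = v.
Proof.
move=> B M h; apply: (form_inj M.2) => w; rewrite h nablaK //.
Qed.

Lemma nabla_linr (R : realType) N (br : 'cV[R]_N -> 'cV[R]_N -> 'cV[R]_N) G x :
  bilin br -> is_metric G -> linf (nabla br G x).
Proof.
move=> B M a u v; have [h1 h2] := B; apply: (form_inj M.2) => w.
rewrite formDl !nablaK // (h2 x) (h1 w) formDl formDl formDr; ring.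
Qed.

Lemma nabla_linl (R : realType) N (br : 'cV[R]_N -> 'cV[R]_N -> 'cV[R]_N) G y :
  bilin br -> is_metric G -> linf (fun x => nabla br G x y).
Proof.
move=> B M a u v; have [h1 h2] := B; apply: (form_inj M.2) => w.
rewrite formDl !nablaK // (h1 y) (h2 w) formDl formDl formDr; ring.
Qed.

Lemma nabla_tors (R : realType) N (br : 'cV[R]_N -> 'cV[R]_N -> 'cV[R]_N) G x y :
  lie_bracket br -> is_metric G -> nabla br G x y - nabla br G y x = br x y.
Proof.
move=> L M; have B := lie_bilin L; apply: (form_inj M.2) => w.
rewrite formBl !nablaK // (lie_anti y x L) (lie_anti x w L) (lie_anti w y L) !formNl.
lra.
Qed.

Lemma nabla_met (R : realType) N (br : 'cV[R]_N -> 'cV[R]_N -> 'cV[R]_N) G x y w :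
  lie_bracket br -> is_metric G ->
  form G (nabla br G x y) w = - form G y (nabla br G x w).
Proof.
move=> L M; have B := lie_bilin L.
rewrite [form G y _]form_sym ?M.1 // !nablaK //.
rewrite (lie_anti y x L) (lie_anti x w L) (lie_anti w y L) !formNl; ring.
Qed.

Lemma formNmx (R : realType) N (X : 'M[R]_N) u v : form (- X) u v = - form X u v.
Proof. by rewrite /form mulmxN mulNmx mxE. Qed.

Lemma skew_mx (R : realType) N (G : 'M[R]_N) (f : 'cV[R]_N -> 'cV[R]_N) :
  linf f -> (forall u v, form G (f u) v = - form G u (f v)) ->
  (mxof f)^T *m G = - (G *m mxof f).
Proof.
move=> lf h; apply: form_eqmx => u v.
by rewrite formNmx -form_mull -form_mulr !mxofE // h.
Qed.

Lemma sa_mx (R : realType) N (G : 'M[R]_N) D :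
  self_adjoint G D -> D^T *m G = G *m D.
Proof. by move=> h; apply: form_eqmx => u v; rewrite -form_mull -form_mulr h. Qed.

Lemma tr_skew (R : realType) N (G L : 'M[R]_N) :
  G \in unitmx -> L^T *m G = - (G *m L) -> \tr L = 0.
Proof.
move=> uG h; have h' : G *m L = - (L^T *m G) by rewrite h opprK.
have : \tr L = - \tr L.
  rewrite -{1}(mul1mx L) -(mulVmx uG) -mulmxA h' mulmxN linearN /=.
  by rewrite mxtrace_mulC -mulmxA mulmxV // mulmx1 mxtrace_tr.
by move=> e; lra.
Qed.

Lemma tr_skew_sa (R : realType) N (G L D : 'M[R]_N) :
  G \in unitmx -> L^T *m G = - (G *m L) -> D^T *m G = G *m D ->
  \tr (L *m D) = 0.
Proof.
move=> uG h hD; have h' : G *m L = - (L^T *m G) by rewrite h opprK.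
have : \tr (L *m D) = - \tr (L *m D).
  rewrite -{1}(mul1mx L) -(mulVmx uG) -!mulmxA (mulmxA G) h' mulNmx mulmxN linearN /=.
  rewrite -(mulmxA L^T) -hD mxtrace_mulC. rewrite (mulmxA L^T) -(mulmxA (L^T *m D^T)) mulmxV // mulmx1.
  by rewrite -trmx_mul mxtrace_tr mxtrace_mulC.
by move=> e; lra.
Qed.

Lemma tr_nil_sq (R : fieldType) p (M : 'M[R]_p.+1) k : M ^+ k = 0 -> \tr M = 0.
Proof.
move=> Mk.
set Xm : 'M[{poly R}]_p.+1 := ('X)%:M.
set Mp : 'M[{poly R}]_p.+1 := map_mx polyC M.
have cXM : GRing.comm Xm Mp by rewrite /GRing.comm /Xm -!mulmxE scalar_mxC.
have := subrXX_comm k cXM.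
have -> : Mp ^+ k = 0 by rewrite /Mp -rmorphXn Mk rmorph0.
have -> : Xm ^+ k = ('X^k)%:M by rewrite /Xm; elim: k {Mk} => [|k IH]; rewrite ?expr0 // exprS IH -mulmxE -scalar_mxM exprS.
rewrite subr0 => E.
have : char_poly M %| ('X - 0%:P) ^+ (k * p.+1).
  rewrite subr0 exprM; apply/dvdpP; exists (\det (\sum_(i < k) Xm ^+ (k.-1 - i) * Mp ^+ i)).
  by rewrite -det_scalar E -mulmxE det_mulmx mulrC.
case/dvdp_exp_XsubCP => d _; rewrite subr0 eqp_monic ?char_poly_monic ?monicXn // => /eqP cE.
have sd : d = p.+1 by have := size_char_poly M; rewrite cE size_polyXn => -[].
have := char_poly_trace M (ltn0Sn p); rewrite cE sd coefXn /= eqn_leq ltnn /=.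
rewrite andbF => h; apply/eqP; by rewrite -oppr_eq0 -h.
Qed.

Lemma iter_mulmx (R : realType) p (M : 'M[R]_p.+1) k v :
  iter k (fun w : 'cV[R]_p.+1 => M *m w) v = M ^+ k *m v.
Proof.
elim: k => [|k IH] /=; first by rewrite expr0 mul1mx.
by rewrite IH exprS -mulmxE mulmxA.
Qed.

Lemma tr_nil (R : realType) n (M : 'M[R]_n) k :
  (forall v : 'cV[R]_n, iter k (fun w : 'cV[R]_n => M *m w) v = 0) -> \tr M = 0.
Proof.
case: n M => [|p] M h; first by rewrite /mxtrace big_ord0.
apply: (@tr_nil_sq _ _ M k); apply/matrixP => i j.
have := h (ev R j); rewrite iter_mulmx => /matrixP /(_ i 0).
by rewrite /ev -colE !mxE.
Qed.

Definition admx (R : realType) N (br : 'cV[R]_N -> 'cV[R]_N -> 'cV[R]_N) b :=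
  mxof (br b).

Lemma admxE (R : realType) N (br : 'cV[R]_N -> 'cV[R]_N -> 'cV[R]_N) b v :
  bilin br -> admx br b *m v = br b v.
Proof. by move=> [_ h2]; rewrite mxofE. Qed.

Lemma tr_ad (R : realType) N (br : 'cV[R]_N -> 'cV[R]_N -> 'cV[R]_N) b :
  bilin br -> nilpotent_lie br -> \tr (admx br b) = 0.
Proof.
move=> B [k hk]; apply: (@tr_nil _ _ _ k) => v.
have -> : iter k (fun w : 'cV[R]_N => admx br b *m w) v = foldr br v (nseq k b).
  by elim: k {hk} => [|k IH] //=; rewrite IH admxE.
by apply: hk; rewrite size_nseq.
Qed.

Inductive LC (R : realType) N (br : 'cV[R]_N -> 'cV[R]_N -> 'cV[R]_N) (j : nat)
  : 'cV[R]_N -> Prop :=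
 | LC0 : LC br j 0
 | LCadd (a : R) u v : LC br j u -> LC br j v -> LC br j (a *: u + v)
 | LCgen xs y : size xs = j -> LC br j (foldr br y xs).

Lemma LC_br (R : realType) N (br : 'cV[R]_N -> 'cV[R]_N -> 'cV[R]_N) j b v :
  bilin br -> LC br j v -> LC br j.+1 (br b v).
Proof.
move=> [h1 h2]; elim=> [|a u w _ IHu _ IHw|xs y sx].
- by rewrite (linf0 (h2 b)); apply: LC0.
- by rewrite (h2 b); apply: LCadd.
- by apply: (@LCgen _ _ _ _ (b :: xs)); rewrite /= sx.
Qed.

Lemma LC_der (R : realType) N (br : 'cV[R]_N -> 'cV[R]_N -> 'cV[R]_N) j D v :
  bilin br -> derivation br D -> LC br j v -> LC br j (D *m v).
Proof.
move=> B hD; elim=> [|a u w _ IHu _ IHw|xs y <-].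
- by rewrite mulmx0; apply: LC0.
- by rewrite mulmxDr -scalemxAr; apply: LCadd.
- elim: xs => [|x xs IH] /=; first by apply: (@LCgen _ _ _ _ [::]).
  rewrite hD -(scale1r (br (D *m x) _)); apply: LCadd; last exact: LC_br.
  by apply: (@LCgen _ _ _ _ (D *m x :: xs)).
Qed.

Lemma tr_der_ad (R : realType) N (br : 'cV[R]_N -> 'cV[R]_N -> 'cV[R]_N) D b :
  bilin br -> nilpotent_lie br -> derivation br D -> \tr (D *m admx br b) = 0.
Proof.
move=> B [k hk] hD; apply: (@tr_nil _ _ _ k) => v.
have : forall i, LC br i (iter i (fun w : 'cV[R]_N => (D *m admx br b) *m w) v).
  elim=> [|i IH] /=; first by apply: (@LCgen _ _ _ _ [::]).
  by rewrite -mulmxA admxE //; apply: LC_der => //; apply: LC_br.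
move/(_ k); elim=> [//|a u w _ -> _ ->|xs y sx]; first by rewrite scaler0 addr0.
exact: hk.
Qed.

Lemma form_block (R : realType) n k (G : 'M[R]_n) (Gb : 'M[R]_k) a X b Y :
  form (block_mx G 0 0 Gb) (col_mx a X) (col_mx b Y) = form G a b + form Gb X Y.
Proof.
by rewrite /form tr_col_mx mul_row_block !mulmx0 addr0 add0r mul_row_col mxE.
Qed.

Lemma brt_col (R : realType) n k (bg : 'cV[R]_n -> 'cV[R]_n -> 'cV[R]_n)
  (A : 'cV[R]_k -> 'M[R]_n) bb a X b Y :
  (forall x y, bb x y = 0) ->
  semibr bg A bb (col_mx a X) (col_mx b Y) = col_mx (bg a b + A X *m b - A Y *m a) 0.
Proof. by move=> h; rewrite /semibr !col_mxKu !col_mxKd h. Qed.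

Lemma brtE (R : realType) n k (bg : 'cV[R]_n -> 'cV[R]_n -> 'cV[R]_n)
  (A : 'cV[R]_k -> 'M[R]_n) bb u v :
  (forall x y, bb x y = 0) ->
  semibr bg A bb u v = col_mx (bg (usubmx u) (usubmx v) + A (dsubmx u) *m usubmx v
                               - A (dsubmx v) *m usubmx u) 0.
Proof. by move=> h; rewrite /semibr h. Qed.

Lemma metric_block (R : realType) n k (G : 'M[R]_n) (Gb : 'M[R]_k) :
  is_metric G -> is_metric Gb -> is_metric (block_mx G 0 0 Gb).
Proof.
move=> [sG uG] [sGb uGb]; split; first by rewrite tr_block_mx sG sGb !trmx0.
by rewrite unitmxE det_lblock unitrM -!unitmxE uG uGb.
Qed.

Lemma ev_lshift (R : realType) n k (i : 'I_n) :
  ev R (lshift k i) = col_mx (ev R i) 0.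
Proof.
rewrite -[LHS]vsubmxK; congr col_mx; apply/matrixP => i' j; rewrite !mxE.
  by rewrite eq_lshift.
by rewrite eq_rlshift.
Qed.

Lemma ev_rshift (R : realType) n k (i : 'I_k) :
  ev R (rshift n i) = col_mx 0 (ev R i).
Proof.
rewrite -[LHS]vsubmxK; congr col_mx; apply/matrixP => i' j; rewrite !mxE.
  by rewrite eq_lrshift.
by rewrite eq_rshift.
Qed.

Lemma ricci_split (R : realType) n k br (Gt : 'M[R]_(n + k)) y z :
  ricci br Gt y z =
  trf (fun a => usubmx (curv br Gt (col_mx a 0) y z)) +
  trf (fun X => dsubmx (curv br Gt (col_mx 0 X) y z)).
Proof.
rewrite /ricci /trf big_split_ord /=; congr (_ + _); apply: eq_bigr => i _.
  by rewrite ev_lshift !mxE.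
by rewrite ev_rshift !mxE.
Qed.

Lemma trf_ext (R : realType) p (f g : 'cV[R]_p -> 'cV[R]_p) :
  (forall u, f u = g u) -> trf f = trf g.
Proof. by move=> h; apply: eq_bigr => i _; rewrite h. Qed.

Lemma trf_add (R : realType) p (f g : 'cV[R]_p -> 'cV[R]_p) :
  trf (fun u => f u + g u) = trf f + trf g.
Proof. by rewrite /trf -big_split; apply: eq_bigr => i _; rewrite mxE. Qed.

Lemma trf_opp (R : realType) p (f : 'cV[R]_p -> 'cV[R]_p) :
  trf (fun u => - f u) = - trf f.
Proof. by rewrite /trf -sumrN; apply: eq_bigr => i _; rewrite mxE. Qed.


Lemma brt_lie (R : realType) n k (bg : 'cV[R]_n -> 'cV[R]_n -> 'cV[R]_n)
  (A : 'cV[R]_k -> 'M[R]_n) bb :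
  lie_bracket bg -> linf A -> (forall x y, bb x y = 0) ->
  (forall x, derivation bg (A x)) ->
  (forall x y, A x *m A y = A y *m A x) ->
  lie_bracket (semibr bg A bb).
Proof.
move=> L lA hb der cm; have [h1 h2] := lie_bilin L; have L' := L.
case: L' => _ _ alt jac.
split.
- move=> a u v w; rewrite !brtE // scale_col_mx add_col_mx scaler0 addr0.
  congr col_mx; rewrite !linearD !linearZ /= lA h1 mulmxDl -scalemxAl.
  vec.
- move=> a u v w; rewrite !brtE // scale_col_mx add_col_mx scaler0 addr0.
  congr col_mx; rewrite !linearD !linearZ /= lA h2 mulmxDl -scalemxAl.
  vec.
- by move=> u; rewrite brtE // alt add0r subrr col_mx0.
- move=> u v w; rewrite !brtE // !col_mxKu !col_mxKd (linf0 lA) !mul0mx !subr0.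
  rewrite !add_col_mx !addr0 -[RHS]col_mx0; congr col_mx.
  set a := usubmx u; set b := usubmx v; set c := usubmx w.
  set X := dsubmx u; set Y := dsubmx v; set Z := dsubmx w.
  rewrite !(linfB _ _ (h2 a)) !(linfD _ _ (h2 a)) !(linfB _ _ (h2 b)) !(linfD _ _ (h2 b)) !(linfB _ _ (h2 c)) !(linfD _ _ (h2 c)) !mulmxDr ?mulmxBr ?mulmxN !der.
  rewrite (lie_anti (A X *m b) c L) (lie_anti (A Y *m c) a L) (lie_anti (A Z *m a) b L).
  rewrite !mulmxA (cm X Y) (cm Y Z) (cm Z X).
  have hJ := jac a b c.
  have -> : bg a (bg b c) = - (bg b (bg c a) + bg c (bg a b)).
    by apply/eqP; rewrite -addr_eq0 addrA hJ.
  vec.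
Qed.

Lemma brt_iwasawa (R : realType) n k (bg : 'cV[R]_n -> 'cV[R]_n -> 'cV[R]_n)
  (A : 'cV[R]_k -> 'M[R]_n) bb G Gb :
  lie_bracket bg -> nilpotent_lie bg -> linf A -> (forall x y, bb x y = 0) ->
  (forall x, self_adjoint G (A x)) ->
  pseudo_iwasawa (semibr bg A bb) (block_mx G 0 0 Gb).
Proof.
move=> L [kk hk] lA hb sa; have [h1 h2] := lie_bilin L.
split.
- by move=> v x; rewrite form_block form0r form0l addr0.
- by move=> u v; rewrite (brtE bg A _ _ hb) !col_mxKd.
- rewrite /nilpotent_lie; exists kk; move=> xs y sx; rewrite -(hk xs y sx); elim: xs {sx} => [//|x xs IH] /=.
  by rewrite IH (brt_col bg A _ _ _ _ hb) col_mxKu (linf0 lA) !mul0mx subr0 addr0.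
- move=> x y; rewrite (brt_col bg A _ _ _ _ hb) (linf0 (h1 0)) !mulmx0 subr0 add0r col_mx0 //.
- move=> x u w; rewrite -[u]vsubmxK -[w]vsubmxK !(brt_col bg A _ _ _ _ hb) !form_block.
  by rewrite !(linf0 (h1 _)) !mulmx0 !subr0 !add0r !form0l !form0r !addr0 sa.
Qed.

Definition beta (R : realType) n k (G : 'M[R]_n) (A : 'cV[R]_k -> 'M[R]_n)
  (Gb : 'M[R]_k) (a b : 'cV[R]_n) : 'cV[R]_k :=
  invmx Gb *m \col_j form G (A (ev R j) *m a) b.

Definition Nt (R : realType) n k (bg : 'cV[R]_n -> 'cV[R]_n -> 'cV[R]_n)
  (G : 'M[R]_n) (A : 'cV[R]_k -> 'M[R]_n) (Gb : 'M[R]_k) (u v : 'cV[R]_(n + k)) :=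
  col_mx (nabla bg G (usubmx u) (usubmx v) - A (dsubmx v) *m usubmx u)
         (beta G A Gb (usubmx u) (usubmx v)).

Lemma form_beta (R : realType) n k (G : 'M[R]_n) (A : 'cV[R]_k -> 'M[R]_n)
  (Gb : 'M[R]_k) a b Z :
  is_metric Gb -> linf A -> form Gb (beta G A Gb a b) Z = form G (A Z *m a) b.
Proof.
move=> [sGb uGb] lA; rewrite form_sym // formGinv // mxE.
have lf : linr (fun Z => form G (A Z *m a) b).
  by move=> c Z1 Z2; rewrite lA mulmxDl -scalemxAl formDl.
rewrite (linr_sum Z lf); apply: eq_bigr => j _; rewrite !mxE.
done.
Qed.

Lemma sa_swap (R : realType) n (G : 'M[R]_n) D u v :
  G^T = G -> self_adjoint G D -> form G (D *m u) v = form G (D *m v) u.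
Proof. by move=> sG h; rewrite h form_sym. Qed.

Lemma Nt_koszul (R : realType) n k (bg : 'cV[R]_n -> 'cV[R]_n -> 'cV[R]_n)
  (G : 'M[R]_n) (A : 'cV[R]_k -> 'M[R]_n) bb (Gb : 'M[R]_k) a X b Y c Z :
  lie_bracket bg -> is_metric G -> is_metric Gb -> linf A ->
  (forall x y, bb x y = 0) -> (forall x, self_adjoint G (A x)) ->
  let br := semibr bg A bb in let Gt := block_mx G 0 0 Gb in
  form Gt (Nt bg G A Gb (col_mx a X) (col_mx b Y)) (col_mx c Z) =
  2^-1 * (form Gt (br (col_mx a X) (col_mx b Y)) (col_mx c Z)
          - form Gt (br (col_mx b Y) (col_mx c Z)) (col_mx a X)
          + form Gt (br (col_mx c Z) (col_mx a X)) (col_mx b Y)).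
Proof.
move=> L M Mb lA hb sa br Gt.
rewrite /br /Gt /Nt !(brt_col bg A _ _ _ _ hb) !form_block !col_mxKu !col_mxKd.
rewrite form_beta // !form0l !addr0 formBl nablaK //; last exact: lie_bilin.
rewrite !formAl !formNl.
rewrite (sa_swap c a M.1 (sa Y)) (sa_swap b a M.1 (sa Z)) (sa_swap c b M.1 (sa X)).
lra.
Qed.

Lemma nablatE (R : realType) n k (bg : 'cV[R]_n -> 'cV[R]_n -> 'cV[R]_n)
  (G : 'M[R]_n) (A : 'cV[R]_k -> 'M[R]_n) bb (Gb : 'M[R]_k) u v :
  lie_bracket bg -> is_metric G -> is_metric Gb -> linf A ->
  (forall x y, bb x y = 0) -> (forall x, self_adjoint G (A x)) ->
  (forall x, derivation bg (A x)) -> (forall x y, A x *m A y = A y *m A x) ->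
  nabla (semibr bg A bb) (block_mx G 0 0 Gb) u v = Nt bg G A Gb u v.
Proof.
move=> L M Mb lA hb sa der cm.
apply: nabla_char; first exact/lie_bilin/brt_lie.
  exact: metric_block.
move=> w; rewrite -[u]vsubmxK -[v]vsubmxK -[w]vsubmxK.
exact: Nt_koszul.
Qed.


Lemma Nt_col (R : realType) n k (bg : 'cV[R]_n -> 'cV[R]_n -> 'cV[R]_n)
  (G : 'M[R]_n) (A : 'cV[R]_k -> 'M[R]_n) (Gb : 'M[R]_k) a X b Y :
  Nt bg G A Gb (col_mx a X) (col_mx b Y) =
  col_mx (nabla bg G a b - A Y *m a) (beta G A Gb a b).
Proof. by rewrite /Nt !col_mxKu !col_mxKd. Qed.

Lemma beta0l (R : realType) n k (G : 'M[R]_n) (A : 'cV[R]_k -> 'M[R]_n) Gb c :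
  beta G A Gb 0 c = 0.
Proof.
rewrite /beta; have -> : \col_j form G (A (ev R j) *m 0) c = 0.
  by apply/matrixP => i j; rewrite !mxE mulmx0 form0l.
by rewrite mulmx0.
Qed.

Lemma beta0r (R : realType) n k (G : 'M[R]_n) (A : 'cV[R]_k -> 'M[R]_n) Gb c :
  beta G A Gb c 0 = 0.
Proof.
rewrite /beta; have -> : \col_j form G (A (ev R j) *m c) 0 = 0.
  by apply/matrixP => i j; rewrite !mxE form0r.
by rewrite mulmx0.
Qed.

Definition Pmx (R : realType) n k (G : 'M[R]_n) (A : 'cV[R]_k -> 'M[R]_n) c :=
  mxof (fun a : 'cV[R]_n => \col_j form G (A (ev R j) *m a) c).

Definition Qmx (R : realType) n k (A : 'cV[R]_k -> 'M[R]_n) (b : 'cV[R]_n) :=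
  mxof (fun w : 'cV[R]_k => A w *m b).

Lemma PmxE (R : realType) n k (G : 'M[R]_n) (A : 'cV[R]_k -> 'M[R]_n) c a :
  Pmx G A c *m a = \col_j form G (A (ev R j) *m a) c.
Proof.
rewrite mxofE // => x u v; apply/matrixP => i j.
by rewrite !mxE mulmxDr -scalemxAr formDl.
Qed.

Lemma QmxE (R : realType) n k (A : 'cV[R]_k -> 'M[R]_n) b w :
  linf A -> Qmx A b *m w = A w *m b.
Proof. by move=> lA; rewrite mxofE // => x u v; rewrite lA mulmxDl -scalemxAl. Qed.

Lemma curv_b (R : realType) n k (bg : 'cV[R]_n -> 'cV[R]_n -> 'cV[R]_n)
  (G : 'M[R]_n) (A : 'cV[R]_k -> 'M[R]_n) bb (Gb : 'M[R]_k) X b Y c Z :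
  lie_bracket bg -> is_metric G -> is_metric Gb -> linf A ->
  (forall x y, bb x y = 0) -> (forall x, self_adjoint G (A x)) ->
  (forall x, derivation bg (A x)) -> (forall x y, A x *m A y = A y *m A x) ->
  dsubmx (curv (semibr bg A bb) (block_mx G 0 0 Gb) (col_mx 0 X) (col_mx b Y) (col_mx c Z))
  = - ((invmx Gb *m Pmx G A c *m Qmx A b) *m X).
Proof.
move=> L M Mb lA hb sa der cm; have [h1 h2] := lie_bilin L.
rewrite /curv !nablatE // (brt_col bg A _ _ _ _ hb) /Nt !col_mxKu !col_mxKd.
rewrite !linearB /= !col_mxKd !mulmx0 !subr0 (linf0 (nabla_linl _ (lie_bilin L) M)) beta0r beta0l (linf0 (h1 b)) add0r oppr0 sub0r add0r.
by rewrite -!mulmxA QmxE // PmxE.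
Qed.

Definition Lmx (R : realType) n (bg : 'cV[R]_n -> 'cV[R]_n -> 'cV[R]_n) G x :=
  mxof (nabla bg G x).

Lemma LmxE (R : realType) n (bg : 'cV[R]_n -> 'cV[R]_n -> 'cV[R]_n) G x v :
  lie_bracket bg -> is_metric G -> Lmx bg G x *m v = nabla bg G x v.
Proof. by move=> L M; rewrite mxofE //; apply: nabla_linr => //; exact: lie_bilin. Qed.

Definition Mg (R : realType) n k (bg : 'cV[R]_n -> 'cV[R]_n -> 'cV[R]_n)
  (G : 'M[R]_n) (A : 'cV[R]_k -> 'M[R]_n) (Gb : 'M[R]_k) b Y c Z :=
  admx bg (A Z *m b) - Lmx bg G (A Z *m b) - A (beta G A Gb b c)
  + Lmx bg G b *m A Z + Qmx A b *m invmx Gb *m Pmx G A c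
  + Lmx bg G c *m A Y - admx bg c *m A Y - A Z *m admx bg b - A Z *m A Y.

Lemma curv_g (R : realType) n k (bg : 'cV[R]_n -> 'cV[R]_n -> 'cV[R]_n)
  (G : 'M[R]_n) (A : 'cV[R]_k -> 'M[R]_n) bb (Gb : 'M[R]_k) a b Y c Z :
  lie_bracket bg -> is_metric G -> is_metric Gb -> linf A ->
  (forall x y, bb x y = 0) -> (forall x, self_adjoint G (A x)) ->
  (forall x, derivation bg (A x)) -> (forall x y, A x *m A y = A y *m A x) ->
  usubmx (curv (semibr bg A bb) (block_mx G 0 0 Gb) (col_mx a 0) (col_mx b Y) (col_mx c Z))
  = curv bg G a b c + Mg bg G A Gb b Y c Z *m a.
Proof.
move=> L M Mb lA hb sa der cm; have B := lie_bilin L; have [h1 h2] := B.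
rewrite /curv !nablatE // (brt_col bg A _ _ _ _ hb) /Nt !col_mxKu !col_mxKd.
rewrite !linearB /= !col_mxKu (linf0 lA) mul0mx addr0.
rewrite (linfB _ _ (nabla_linr a B M)) (linfB _ _ (nabla_linr b B M)).
rewrite (linfB _ _ (nabla_linl c B M)).
rewrite /Mg !mulmxDl !mulNmx -!mulmxA !LmxE // !admxE // !QmxE // PmxE.
rewrite -/(beta G A Gb a c).
have t1 : nabla bg G a (A Z *m b) = nabla bg G (A Z *m b) a - bg (A Z *m b) a.
  by rewrite -(lie_anti a _ L) -(nabla_tors _ _ L M) addrC subrK.
have t2 : nabla bg G (A Y *m a) c = nabla bg G c (A Y *m a) - bg c (A Y *m a).
  by rewrite -(lie_anti _ c L) -(nabla_tors _ _ L M) addrC subrK.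
rewrite t1 t2 (lie_anti a b L).
rewrite !mulmxN. vec.
Qed.

Lemma Lmx_skew (R : realType) n (bg : 'cV[R]_n -> 'cV[R]_n -> 'cV[R]_n) G x :
  lie_bracket bg -> is_metric G -> (Lmx bg G x)^T *m G = - (G *m Lmx bg G x).
Proof.
move=> L M; apply: skew_mx; first by apply: nabla_linr => //; exact: lie_bilin.
by move=> u v; apply: nabla_met.
Qed.

Lemma ricci_t (R : realType) n k (bg : 'cV[R]_n -> 'cV[R]_n -> 'cV[R]_n)
  (G : 'M[R]_n) (A : 'cV[R]_k -> 'M[R]_n) bb (Gb : 'M[R]_k) :
  lie_bracket bg -> nilpotent_lie bg -> is_metric G -> ricci_flat bg G ->
  is_metric Gb -> linf A ->
  (forall x y, bb x y = 0) -> (forall x, self_adjoint G (A x)) ->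
  (forall x, derivation bg (A x)) -> (forall x y, A x *m A y = A y *m A x) ->
  (forall x y, \tr (A x *m A y) = 0) ->
  (forall b c, \tr (A (beta G A Gb b c)) = 0) ->
  ricci_flat (semibr bg A bb) (block_mx G 0 0 Gb).
Proof.
move=> L nil M RF Mb lA hb sa der cm trAA trB y z.
have B := lie_bilin L.
rewrite -[y]vsubmxK -[z]vsubmxK.
move: (usubmx y) (dsubmx y) (usubmx z) (dsubmx z) => b Y c Z.
rewrite ricci_split.
rewrite (@trf_ext _ _ _ (fun a => curv bg G a b c + Mg bg G A Gb b Y c Z *m a));
  last by move=> a; apply: curv_g.
rewrite (@trf_ext _ _ _ (fun X => - ((invmx Gb *m Pmx G A c *m Qmx A b) *m X)));
  last by move=> X; apply: curv_b.
rewrite trf_add trf_opp !(@trf_mx _ _ _ _ (fun u => erefl)).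
have -> : trf (fun a => curv bg G a b c) = 0 by apply: RF.
rewrite /Mg !linearD !linearN /=.
rewrite tr_ad // (tr_skew M.2 (Lmx_skew _ L M)) trB.
rewrite (tr_skew_sa M.2 (Lmx_skew _ L M) (sa_mx (sa Z))).
rewrite (tr_skew_sa M.2 (Lmx_skew _ L M) (sa_mx (sa Y))).
rewrite (mxtrace_mulC (admx bg c)) !tr_der_ad // trAA.
rewrite -(mulmxA (Qmx A b)) (mxtrace_mulC (Qmx A b)).
lra.
Qed.

Lemma general_thm (R : realType) n k (bg : 'cV[R]_n -> 'cV[R]_n -> 'cV[R]_n)
  (G : 'M[R]_n) (A : 'cV[R]_k -> 'M[R]_n) bb (Gb : 'M[R]_k) :
  lie_bracket bg -> nilpotent_lie bg -> is_metric G -> ricci_flat bg G ->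
  is_metric Gb -> linf A ->
  (forall x y, bb x y = 0) -> (forall x, self_adjoint G (A x)) ->
  (forall x, derivation bg (A x)) -> (forall x y, A x *m A y = A y *m A x) ->
  (forall x y, \tr (A x *m A y) = 0) ->
  (forall b c, \tr (A (beta G A Gb b c)) = 0) ->
  lie_bracket (semibr bg A bb)
  /\ is_metric (block_mx G 0 0 Gb)
  /\ ricci_flat (semibr bg A bb) (block_mx G 0 0 Gb)
  /\ pseudo_iwasawa (semibr bg A bb) (block_mx G 0 0 Gb).
Proof.
move=> L nil M RF Mb lA hb sa der cm trAA trB.
split; first exact: brt_lie.
split; first exact: metric_block.
split; first exact: ricci_t.
exact: brt_iwasawa.
Qed.

Lemma linf_big (R : realType) p m (W : lmodType R) (f : 'cV[R]_p -> W)
  (c : 'I_m -> R) (w : 'I_m -> 'cV[R]_p) :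
  linf f -> f (\sum_i c i *: w i) = \sum_i c i *: f (w i).
Proof.
move=> hf; elim/big_rec2: _ => [|j y1 y2 _ <-]; first exact: linf0.
by rewrite linfD // linfZ.
Qed.

Lemma comb_lin (R : realType) n m (D : 'I_m -> 'M[R]_n) : linf (comb D).
Proof.
move=> a u v; rewrite /comb scaler_sumr -big_split /=; apply: eq_bigr => i _.
by rewrite !mxE scalerDl scalerA.
Qed.

Lemma comb_sa (R : realType) n m (G : 'M[R]_n) (D : 'I_m -> 'M[R]_n) x :
  (forall i, self_adjoint G (D i)) -> self_adjoint G (comb D x).
Proof.
move=> sa; have e : (comb D x)^T *m G = G *m comb D x.
  rewrite /comb linear_sum /= mulmx_suml mulmx_sumr; apply: eq_bigr => i _.
  by rewrite linearZ /= -scalemxAl -scalemxAr sa_mx.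
by move=> u v; rewrite form_mull e -form_mulr.
Qed.

Lemma comb_der (R : realType) n m (bg : 'cV[R]_n -> 'cV[R]_n -> 'cV[R]_n)
  (D : 'I_m -> 'M[R]_n) x :
  lie_bracket bg -> (forall i, derivation bg (D i)) -> derivation bg (comb D x).
Proof.
move=> L der u v; have [h1 h2] := lie_bilin L.
have e : forall w : 'cV[R]_n, comb D x *m w = \sum_i x i 0 *: (D i *m w).
  by move=> w; rewrite /comb mulmx_suml; apply: eq_bigr => i _; rewrite -scalemxAl.
rewrite !e (linf_big _ _ (h1 v)) (linf_big _ _ (h2 u)) -big_split /=.
by apply: eq_bigr => i _; rewrite der scalerDr.
Qed.

Lemma ca_zero (R : realType) n m (G : 'M[R]_n) (D : 'I_m -> 'M[R]_n) ca i j :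
  is_metric G -> (forall i, self_adjoint G (D i)) -> lin_indep D ->
  (forall i j, D i *m D j - D j *m D i = comb D (ca i j)) -> ca i j = 0.
Proof.
move=> [sG uG] sa li hc; apply: li.
set C := comb D (ca i j).
have e1 : C^T *m G = G *m C by apply: sa_mx; apply: comb_sa.
have e2 : C^T *m G = - (G *m C).
  rewrite /C -hc linearB /= !trmx_mul mulmxBl -!mulmxA (sa_mx (sa i)) (sa_mx (sa j)) !mulmxA.
  by rewrite (sa_mx (sa i)) (sa_mx (sa j)) mulmxBr opprB !mulmxA.
have : G *m C = 0.
  apply/matrixP => a b; move: (etrans (esym e1) e2) => /matrixP/(_ a b); rewrite !mxE; lra.
by move=> h; rewrite -[C]mul1mx -(mulVmx uG) -mulmxA h mulmx0.
Qed.

Lemma comb_comm (R : realType) n m (D : 'I_m -> 'M[R]_n) x y :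
  (forall i j, D i *m D j = D j *m D i) -> comb D x *m comb D y = comb D y *m comb D x.
Proof.
move=> hc.
have e : forall x y : 'cV[R]_m, comb D x *m comb D y =
    \sum_i \sum_j (x i 0 * y j 0) *: (D i *m D j).
  move=> x' y'; rewrite /comb mulmx_suml; apply: eq_bigr => i _.
  rewrite mulmx_sumr; apply: eq_bigr => j _.
  by rewrite -scalemxAl -scalemxAr scalerA.
rewrite !e exchange_big /=; apply: eq_bigr => i _; apply: eq_bigr => j _.
by rewrite mulrC hc.
Qed.

Lemma D_comm (R : realType) n m (G : 'M[R]_n) (D : 'I_m -> 'M[R]_n) ca :
  is_metric G -> (forall i, self_adjoint G (D i)) -> lin_indep D ->
  (forall i j, D i *m D j - D j *m D i = comb D (ca i j)) ->
  forall i j, D i *m D j = D j *m D i.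
Proof.
move=> M sa li hc i j; apply/eqP; rewrite -subr_eq0 hc (ca_zero i j M sa li hc).
by rewrite (linf0 (comb_lin D)).
Qed.

Lemma bra_zero (R : realType) m (ca : 'I_m -> 'I_m -> 'cV[R]_m) :
  (forall i j, ca i j = 0) -> forall x y, bra ca x y = 0.
Proof.
move=> h x y; rewrite /bra big1 // => i _; rewrite big1 // => j _.
by rewrite h scaler0.
Qed.

Lemma tr_comb (R : realType) n m (D : 'I_m -> 'M[R]_n) x :
  \tr (comb D x) = \sum_i x i 0 * \tr (D i).
Proof. by rewrite /comb linear_sum; apply: eq_bigr => i _; rewrite linearZ. Qed.

Lemma unit_of_ker (R : realType) p (M : 'M[R]_p) :
  (forall v : 'rV[R]_p, v *m M = 0 -> v = 0) -> M \in unitmx.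
Proof.
move=> h; rewrite -row_free_unit -kermx_eq0; apply/eqP/row_matrixP => i.
by rewrite row0; apply: h; rewrite -row_mul mulmx_ker row0.
Qed.

Lemma metricH_metric (R : realType) n m (D : 'I_m -> 'M[R]_n) (Ga : 'M[R]_m) :
  is_metric Ga -> nondeg_on (fun x => \tr (comb D x) = 0) Ga ->
  (exists x : 'cV[R]_m, \tr (comb D x) != 0) -> is_metric (metricH D Ga).
Proof.
move=> [sGa uGa] nd [x0 hx0]; split.
  rewrite /metricH tr_block_mx sGa trmx0; congr block_mx; apply/matrixP => i j; by rewrite !mxE.
apply: unit_of_ker => v; rewrite -[v]hsubmxK /metricH mul_row_block mulmx0 addr0.
rewrite -row_mx0 => /eq_row_mx [e1 e2].
set x := lsubmx v in e1 e2 *; set h := rsubmx v in e1 e2 *.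
set Tt := \matrix_(i < 1, j < m) \tr (D j) in e1.
have trx : \tr (comb D x^T) = 0.
  move/matrixP: e2 => /(_ 0 0); rewrite !mxE => e.
  by rewrite tr_comb -[RHS]e; apply: eq_bigr => i _; rewrite !mxE.
have hTy : forall y, \tr (comb D y) = 0 -> Tt *m y = 0.
  move=> y hy; apply/matrixP => a b; rewrite !ord1 !mxE -[RHS]hy tr_comb.
  by apply: eq_bigr => j _; rewrite !mxE mulrC.
have x0' : x = 0.
  rewrite -[x]trmxK (nd _ trx) ?trmx0 // => y hy.
  have e3 : x *m Ga = - (h *m Tt) by apply/eqP; rewrite -addr_eq0 e1.
  by rewrite /form trmxK e3 mulNmx -mulmxA hTy // mulmx0 oppr0 mxE.
move: e1; rewrite x0' mul0mx add0r => e1.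
have h00 : h 0 0 = 0.
  have : h 0 0 * \tr (comb D x0) = 0.
    rewrite tr_comb mulr_sumr big1 // => j _.
    move/matrixP: e1 => /(_ 0 j); rewrite !mxE big_ord1 !mxE => e.
    by rewrite mulrCA e mulr0.
  by move/eqP; rewrite mulf_eq0 (negbTE hx0) orbF => /eqP.
have h0 : h = 0 by apply/matrixP => a b; rewrite !ord1 h00 mxE.
by rewrite h0 row_mx0.
Qed.

Lemma form_eH (R : realType) n m (D : 'I_m -> 'M[R]_n) (Ga : 'M[R]_m) w :
  form (metricH D Ga) (ev R (rshift m (0 : 'I_1))) w = \tr (comb D (usubmx w)).
Proof.
rewrite -[w]vsubmxK ev_rshift /form /metricH tr_col_mx trmx0 mul_row_block.
rewrite !mul0mx !add0r mul_row_col mulmx0 mul0mx addr0 col_mxKu /ev trmx_delta -rowE.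
rewrite tr_comb !mxE; apply: eq_bigr => j _; by rewrite !mxE mulrC.
Qed.

Lemma actH_lin (R : realType) n m (D : 'I_m -> 'M[R]_n) : linf (actH D).
Proof. by move=> a u v; rewrite /actH linearD linearZ /= comb_lin. Qed.

Lemma actH_beta (R : realType) n m (G : 'M[R]_n) (D : 'I_m -> 'M[R]_n) (Ga : 'M[R]_m) b c :
  is_metric (metricH D Ga) ->
  \tr (actH D (beta G (actH D) (metricH D Ga) b c)) = 0.
Proof.
move=> [_ uM]; rewrite /actH -(form_eH D Ga) /beta formGinv // [X in X^T]/ev trmx_delta -rowE !mxE.
by rewrite ev_rshift col_mxKu (linf0 (comb_lin D)) mul0mx form0l.
Qed.

Unset Implicit Arguments.

Theorem proposition4p14 (R : realType) (n m : nat)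
  (bg : 'cV[R]_n -> 'cV[R]_n -> 'cV[R]_n) (G : 'M[R]_n)
  (D : 'I_m -> 'M[R]_n) (ca : 'I_m -> 'I_m -> 'cV[R]_m) :
  lie_bracket bg -> nilpotent_lie bg -> is_metric G -> ricci_flat bg G ->
  (forall i, derivation bg (D i)) -> (forall i, self_adjoint G (D i)) ->
  lin_indep D ->
  (forall i j, D i *m D j - D j *m D i = comb D (ca i j)) ->
  (forall x y : 'cV[R]_m, \tr (comb D x *m comb D y) = 0) ->
  ((forall x : 'cV[R]_m, \tr (comb D x) = 0) ->
     forall Ga : 'M[R]_m, is_metric Ga ->
       lie_bracket (semibr bg (comb D) (bra ca))
       /\ is_metric (block_mx G 0 0 Ga)
       /\ ricci_flat (semibr bg (comb D) (bra ca)) (block_mx G 0 0 Ga)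
       /\ pseudo_iwasawa (semibr bg (comb D) (bra ca)) (block_mx G 0 0 Ga))
  /\
  ((exists x : 'cV[R]_m, \tr (comb D x) != 0) ->
     forall Ga : 'M[R]_m, is_metric Ga ->
       nondeg_on (fun x => \tr (comb D x) = 0) Ga ->
       lie_bracket (semibr bg (actH D) (braH ca))
       /\ is_metric (block_mx G 0 0 (metricH D Ga))
       /\ ricci_flat (semibr bg (actH D) (braH ca)) (block_mx G 0 0 (metricH D Ga))
       /\ pseudo_iwasawa (semibr bg (actH D) (braH ca)) (block_mx G 0 0 (metricH D Ga))).
Proof.
move=> L nil M RF der sa li hc trAA.
have cD := D_comm M sa li hc.
have ca0 : forall i j, ca i j = 0 := fun i j => ca_zero i j M sa li hc.
split.
- move=> htr Ga MGa; apply: general_thm => //.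
  + exact: comb_lin.
  + exact: bra_zero.
  + by move=> x; apply: comb_sa.
  + by move=> x; apply: comb_der.
  + by move=> x y; apply: comb_comm.
- move=> hx Ga MGa nd; have MH := metricH_metric MGa nd hx.
  apply: general_thm => //.
  + exact: actH_lin.
  + by move=> x y; rewrite /braH bra_zero // col_mx0.
  + by move=> x; apply: comb_sa.
  + by move=> x; apply: comb_der.
  + by move=> x y; apply: comb_comm.
  + by move=> x y; apply: trAA.
  + by move=> b c; apply: actH_beta.
Qed.
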